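(* In the Com-IC model, if $q_{\mathcal{B}|\mathcal{A}}=q_{\mathcal{B}|\emptyset}$ then, for any fixed $\mathcal{B}$-seed set $S_\mathcal{B}$, the probability distribution of the final set of $\mathcal{B}$-adopted nodes is the same for every $\mathcal{A}$-seed set $S_\mathcal{A}$ (including $S_\mathcal{A}=\emptyset$). Symmetrically, if $q_{\mathcal{A}|\mathcal{B}}=q_{\mathcal{A}|\emptyset}$, the distribution of the final set of $\mathcal{A}$-adopted nodes does not depend on the $\mathcal{B}$-seed set.
   Context: Com-IC model. Let $G=(V,E,p)$ be a directed graph with $p:E\to[0,1]$ and $N^-(v)$ the in-neighbours of $v$. Two items $\mathcal{A},\mathcal{B}$; GAPs $\mathbf{Q}=(q_{\mathcal{A}|\emptyset},q_{\mathcal{A}|\mathcal{B}},q_{\mathcal{B}|\emptyset},q_{\mathcal{B}|\mathcal{A}})\in[0,1]^4$. Given seed sets $S_\mathcal{A},S_\mathcal{B}\subseteq V$, randomness: each edge $(u,v)$ independently live w.p. $p(u,v)$; each node $v$ independently draws $\alpha^v_\mathcal{A},\alpha^v_\mathcal{B}$ uniform on $[0,1]$, a uniformly random permutation $\pi_v$ of $N^-(v)$, and a fair coin $\tau_v\in\{\mathcal{A},\mathcal{B}\}$. For each item $X$ each node is $X$-idle, $X$-suspended, $X$-adopted or $X$-rejected; initially all idle. At step $0$ nodes of $S_\mathcal{A}$ become $\mathcal{A}$-adopted and nodes of $S_\mathcal{B}$ become $\mathcal{B}$-adopted (order for nodes in both given by $\tau_v$). At step $t\ge1$, $v$ is informed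 of $X$ by in-neighbour $u$ if $(u,v)$ is live and $u$ adopted $X$ at step $t-1$; informing in-neighbours are processed in order $\pi_v$ (an in-neighbour that adopted both items is processed for both, in its adoption order). When $v$ is informed of $X$ ($Y$ the other item) while $X$-idle: if $Y$-adopted, $v$ becomes $X$-adopted if $\alpha^v_X\le q_{X|Y}$, else $X$-rejected; otherwise $X$-adopted if $\alpha^v_X\le q_{X|\emptyset}$, else $X$-suspended. Informing a non-$X$-idle node of $X$ has no effect. Reconsideration: when an $X$-suspended node becomes $Y$-adopted, it becomes $X$-adopted if $\alpha^v_X\le q_{X|Y}$, else $X$-rejected. The process stops when nothing changes. *)

(* Defs.v *)
From mathcomp Require Import all_boot.
From Stdlib Require Import Reals.
From Stdlib Require Import ClassicalEpsilon.

Set Implicit Arguments.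
Unset Strict Implicit.
Unset Printing Implicit Defensive.

Inductive item := IA | IB.
Inductive status := Idle | Susp | Adpt | Rej.

Definition other (X : item) : item := match X with IA => IB | IB => IA end.

Record GAP := mkGAP { qA0 : R; qAB : R; qB0 : R; qBA : R }.

Definition q_cond (Q : GAP) (X : item) : R :=
  match X with IA => qAB Q | IB => qBA Q end.
Definition q_none (Q : GAP) (X : item) : R :=
  match X with IA => qA0 Q | IB => qB0 Q end.

Definition getS (X : item) (s : status * status) : status :=
  match X with IA => s.1 | IB => s.2 end.
Definition setS (X : item) (x : status) (s : status * status) : status * status :=
  match X with IA => (x, s.2) | IB => (s.1, x) end.

Record Omega (V : finType) := mkOmega {
  live  : V -> V -> bool;
  piO   : V -> seq V;            (* pi_v : ordering of the in-neighbours of v *)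
  tauO  : V -> bool;             (* tau_v : true = A first, false = B first *)
  alA   : V -> R;
  alB   : V -> R
}.

Definition alpha (V : finType) (om : Omega V) (X : item) (v : V) : R :=
  match X with IA => alA om v | IB => alB om v end.

(* node v becomes X-adopted (from local statuses ss, with the list acc of
   items adopted by v so far in the current step); includes the
   reconsideration rule for a Y-suspended node. *)
Definition becomes_adopted (V : finType) (Q : GAP) (om : Omega V) (v : V)
    (X : item) (ss : status * status) (acc : seq item)
    : (status * status) * seq item :=
  let ss1 := setS X Adpt ss in
  let acc1 := rcons acc X in
  let Y := other X in
  match getS Y ss1 with
  | Susp => if Rle_dec (alpha om Y v) (q_cond Q Y)
            then (setS Y Adpt ss1, rcons acc1 Y)
            else (setS Y Rej ss1, acc1)
  | _ => (ss1, acc1)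
  end.

Definition inform (V : finType) (Q : GAP) (om : Omega V) (v : V) (X : item)
    (st : (status * status) * seq item) : (status * status) * seq item :=
  let: (ss, acc) := st in
  match getS X ss with
  | Idle =>
      match getS (other X) ss with
      | Adpt => if Rle_dec (alpha om X v) (q_cond Q X)
                then becomes_adopted Q om v X ss acc
                else (setS X Rej ss, acc)
      | _ => if Rle_dec (alpha om X v) (q_none Q X)
             then becomes_adopted Q om v X ss acc
             else (setS X Susp ss, acc)
      end
  | _ => st
  end.

(* global state: statuses of every node, and for every node the list (in
   order) of the items it adopted at the previous step *)
Record State (V : finType) := mkState {
  sts   : V -> status * status;
  newly : V -> seq item
}.

Definition init_state (V : finType) (om : Omega V) (SA SB : {set V}) : State V :=
  mkState
    (fun v => (if v \in SA then Adpt else Idle, if v \in SB then Adpt else Idle))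
    (fun v => if (v \in SA) && (v \in SB) then
                (if tauO om v then [:: IA; IB] else [:: IB; IA])
              else if v \in SA then [:: IA]
              else if v \in SB then [:: IB] else [::]).

Definition step (V : finType) (Q : GAP) (om : Omega V) (st : State V) : State V :=
  let events v := flatten [seq (if live om u v then newly st u else [::]) | u <- piO om v] in
  let r v := foldl (fun a X => inform Q om v X a) (sts st v, [::]) (events v) in
  mkState (fun v => (r v).1) (fun v => (r v).2).

Definition state_at (V : finType) (Q : GAP) (om : Omega V) (SA SB : {set V}) (t : nat)
    : State V := iter t (step Q om) (init_state om SA SB).

Definition stopped (V : finType) (Q : GAP) (om : Omega V) (SA SB : {set V}) (t : nat) : Prop :=
  forall v, sts (state_at Q om SA SB t.+1) v = sts (state_at Q om SA SB t) v.

Definition final_adopted (V : finType) (Q : GAP) (om : Omega V) (SA SB : {set V})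
    (X : item) (v : V) : Prop :=
  exists t, stopped Q om SA SB t /\ getS X (sts (state_at Q om SA SB t) v) = Adpt.

Definition final_set_is (V : finType) (Q : GAP) (om : Omega V) (SA SB : {set V})
    (X : item) (T : {set V}) : Prop :=
  forall v, v \in T <-> final_adopted Q om SA SB X v.

Definition indic (P : Prop) : R :=
  if excluded_middle_informative P then 1%R else 0%R.

(* Riemann integral over [0,1], totalised to 0 for non-integrable f *)
Definition Int01 (f : R -> R) : R :=
  match excluded_middle_informative (exists pr : Riemann_integrable f 0 1, True) with
  | left H => RiemannInt (proj1_sig (constructive_indefinite_description _ H))
  | right _ => 0%R
  end.

Definition sumR (T : Type) (f : T -> R) (s : seq T) : R :=
  foldr (fun x acc => (f x + acc)%R) 0%R s.

Definition upd (T : eqType) (U : Type) (f : T -> U) (x : T) (y : U) : T -> U :=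
  fun z => if z == x then y else f z.

Definition in_nbrs (V : finType) (E : rel V) (v : V) : seq V :=
  [seq u <- enum V | E u v].

Definition edges (V : finType) (E : rel V) : seq (V * V) :=
  [seq e <- enum {: V * V} | E e.1 e.2].

(* each edge (u,v) independently live with probability p u v *)
Fixpoint E_edges (V : finType) (p : V -> V -> R) (es : seq (V * V))
    (k : (V -> V -> bool) -> R) (lv : V -> V -> bool) : R :=
  match es with
  | [::] => k lv
  | e :: es' =>
      (p e.1 e.2 * E_edges p es' k (fun a b => if (a, b) == e then true else lv a b)
       + (1 - p e.1 e.2) * E_edges p es' k (fun a b => if (a, b) == e then false else lv a b))%R
  end.

Fixpoint E_pi (V : finType) (E : rel V) (vs : seq V)
    (k : (V -> seq V) -> R) (pi : V -> seq V) : R :=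
  match vs with
  | [::] => k pi
  | v :: vs' =>
      let P := permutations (in_nbrs E v) in
      (/ INR (size P) * sumR (fun s => E_pi E vs' k (upd pi v s)) P)%R
  end.

Fixpoint E_tau (V : finType) (vs : seq V) (k : (V -> bool) -> R) (tau : V -> bool) : R :=
  match vs with
  | [::] => k tau
  | v :: vs' => (/ 2 * E_tau vs' k (upd tau v true) + / 2 * E_tau vs' k (upd tau v false))%R
  end.

(* each alpha_v uniform on [0,1] (iterated integral) *)
Fixpoint E_unif (V : finType) (vs : seq V) (k : (V -> R) -> R) (a : V -> R) : R :=
  match vs with
  | [::] => k a
  | v :: vs' => Int01 (fun x => E_unif vs' k (upd a v x))
  end.

Definition Expect (V : finType) (E : rel V) (p : V -> V -> R) (f : Omega V -> R) : R :=
  E_edges p (edges E) (fun lv =>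
  E_pi E (enum V) (fun pi =>
  E_tau (enum V) (fun tau =>
  E_unif (enum V) (fun aA =>
  E_unif (enum V) (fun aB => f (mkOmega lv pi tau aA aB))
    (fun _ => 0%R)) (fun _ => 0%R)) (fun _ => false)) (fun _ => [::])) (fun _ _ => false).

Definition Pr_final (V : finType) (E : rel V) (p : V -> V -> R) (Q : GAP)
    (SA SB : {set V}) (X : item) (T : {set V}) : R :=
  Expect E p (fun om => indic (final_set_is Q om SA SB X T)).

Definition GAP_valid (Q : GAP) : Prop :=
  (0 <= qA0 Q <= 1 /\ 0 <= qAB Q <= 1 /\ 0 <= qB0 Q <= 1 /\ 0 <= qBA Q <= 1)%R.

(* Main.v *)
Require Import Defs.
From mathcomp Require Import all_boot.
From Stdlib Require Import Reals Lra Classical FunctionalExtensionality ClassicalEpsilon.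
From mathcomp Require Import all_boot.
From mathcomp Require Import zify.

Set Implicit Arguments.
Unset Strict Implicit.

Section S.
Variables (V : finType) (Q : GAP) (om : Omega V) (X : item).
Hypothesis HQ : q_cond Q X = q_none Q X.

Definition cls (s : status) : nat := match s with Idle => 0 | Adpt => 1 | _ => 2 end.
Definition isX (Z : item) : bool := match X, Z with IA, IA => true | IB, IB => true | _, _ => false end.
Definition av (v : V) : bool := if Rle_dec (alpha om X v) (q_none Q X) then true else false.
Definition newcls (c : nat) (b a : bool) : nat :=
  if c == 0 then (if b then (if a then 1 else 2) else 0) else c.
Definition InvS (v : V) (ss : status * status) : Prop :=
  getS X ss = Susp -> Rlt (q_none Q X) (alpha om X v).

Lemma inform_X Z v ss acc : InvS v ss ->
  let r := inform Q om v Z (ss, acc) in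
  InvS v r.1 /\ cls (getS X r.1) = newcls (cls (getS X ss)) (isX Z) (av v) /\
  has isX r.2 = has isX acc || ((cls (getS X ss) == 0) && isX Z && av v).
Proof.
move: HQ; rewrite /InvS /av /isX /newcls /cls.
case: X => HQ'; case: Z; case: ss => s1 s2; case: s1; case: s2;
  rewrite /= /becomes_adopted /= ?has_rcons /=;
  repeat (case: Rle_dec => /=; rewrite ?has_rcons /=); rewrite ?orbF ?orbT //=;
  intros; try split; try split; try done; try (intros; discriminate); try lra; try (simpl in HQ'; exfalso; lra); match goal with H : Susp = Susp -> _ |- _ => have := H erefl; simpl in HQ'; lra end.
Qed.

Lemma fold_X v evs ss acc : InvS v ss ->
  let r := foldl (fun a Z => inform Q om v Z a) (ss, acc) evs in
  InvS v r.1 /\ cls (getS X r.1) = newcls (cls (getS X ss)) (has isX evs) (av v) /\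
  has isX r.2 = has isX acc || ((cls (getS X ss) == 0) && has isX evs && av v).
Proof.
elim: evs ss acc => [|Z evs IH] ss acc Hi; cbn [foldl].
- split=> //; split; last by rewrite andbF orbF.
  by rewrite /newcls; case: eqP => // ->.
case E: (inform Q om v Z (ss, acc)) => [ss1 acc1].
have := inform_X Z acc Hi; rewrite E /= => -[H1 [H2 H3]].
have [G1 [G2 G3]] := IH ss1 acc1 H1.
split=> //; rewrite G2 G3 H2 H3 /newcls.
case: (cls (getS X ss)) => [|c]; case: (isX Z); case: (has isX evs); case: (av v);
  case: (has isX acc) => //=.
Qed.

Definition InvSt (st : State V) := forall v, InvS v (sts st v).
Definition Rel (st1 st2 : State V) := forall v,
  cls (getS X (sts st1 v)) = cls (getS X (sts st2 v)) /\
  has isX (newly st1 v) = has isX (newly st2 v).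

Lemma Inv_step st : InvSt st -> InvSt (step Q om st).
Proof. move=> H v; rewrite /step /=; exact: (@fold_X v _ _ [::] (H v)).1. Qed.

Lemma Rel_step st1 st2 : InvSt st1 -> InvSt st2 -> Rel st1 st2 -> Rel (step Q om st1) (step Q om st2).
Proof.
move=> I1 I2 HR v; rewrite /step /=.
set e1 := flatten _; set e2 := flatten _.
have He : has isX e1 = has isX e2.
  rewrite /e1 /e2; elim: (piO om v) => //= u s IH; rewrite !has_cat IH.
  by case: (live om u v) => //; rewrite (HR u).2.
have [_ [A1 B1]] := @fold_X v e1 _ [::] (I1 v).
have [_ [A2 B2]] := @fold_X v e2 _ [::] (I2 v).
by rewrite A1 A2 B1 B2 He (HR v).1.
Qed.

Lemma cls_mono st v : InvSt st -> cls (getS X (sts st v)) = 1 -> cls (getS X (sts (step Q om st) v)) = 1.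
Proof.
move=> I1 H; rewrite /step /=.
have [_ [A1 _]] := @fold_X v (flatten [seq (if live om u v then newly st u else [::]) | u <- piO om v]) _ [::] (I1 v).
by rewrite A1 H.
Qed.

Definition rk (s : status) : nat := match s with Idle => 0 | Susp => 1 | _ => 2 end.
Definition rkp (ss : status * status) : nat := rk ss.1 + rk ss.2.

Lemma inform_rk Z v ss acc :
  let r := inform Q om v Z (ss, acc) in
  (r.1 = ss \/ rkp ss < rkp r.1) /\ rkp ss + size r.2 <= rkp r.1 + size acc /\ size acc <= size r.2.
Proof.
rewrite /rkp /rk; case: Z; case: ss => s1 s2; case: s1; case: s2;
  rewrite /= /becomes_adopted /=;
  repeat (case: Rle_dec => /=); intros; rewrite ?size_rcons; split; try (by left); try (right; lia); try lia.
Qed.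

Lemma fold_rk v evs ss acc :
  let r := foldl (fun a Z => inform Q om v Z a) (ss, acc) evs in
  (r.1 = ss \/ rkp ss < rkp r.1) /\ rkp ss + size r.2 <= rkp r.1 + size acc /\ size acc <= size r.2.
Proof.
elim: evs ss acc => [|Z evs IH] ss acc; cbn [foldl].
- by rewrite /=; split; [left | lia].
case E: (inform Q om v Z (ss, acc)) => [ss1 acc1].
have := inform_rk Z v ss acc; rewrite E /= => -[H1 [H2 H3]].
have [G1 [G2 G3]] := IH ss1 acc1.
split; last lia.
case: G1 => G1; case: H1 => H1; [left; congruence | right; rewrite G1; lia | right; rewrite -H1; lia | right; lia].
Qed.

Lemma rk_step st v : rkp (sts st v) <= rkp (sts (step Q om st) v) /\
  (sts (step Q om st) v <> sts st v -> rkp (sts st v) < rkp (sts (step Q om st) v)).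
Proof.
rewrite /step /=.
have [H1 [H2 _]] := @fold_rk v (flatten [seq (if live om u v then newly st u else [::]) | u <- piO om v]) (sts st v) [::].
change (size (@nil item)) with 0 in H2.
split; first lia.
by case: H1.
Qed.

Lemma rk_newly st v : sts (step Q om st) v = sts st v -> newly (step Q om st) v = [::].
Proof.
rewrite /step /=.
have [_ [H2 _]] := @fold_rk v (flatten [seq (if live om u v then newly st u else [::]) | u <- piO om v]) (sts st v) [::].
change (size (@nil item)) with 0 in H2.
move=> E; rewrite E in H2; move: H2; case: (foldl _ _ _).2 => //= ? ?; lia.
Qed.

Lemma state_atS SA SB t : state_at Q om SA SB t.+1 = step Q om (state_at Q om SA SB t).
Proof. by []. Qed.

Lemma stopped_next SA SB t : stopped Q om SA SB t -> stopped Q om SA SB t.+1.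
Proof.
move=> Hs v.
have Hn : forall u, newly (state_at Q om SA SB t.+1) u = [::].
  by move=> u; rewrite state_atS; apply: rk_newly; rewrite -state_atS; apply: Hs.
rewrite (state_atS _ _ t.+1); move: (state_at Q om SA SB t.+1) Hn => st Hn.
rewrite /step /=.
rewrite (_ : flatten _ = [::]) //.
by elim: (piO om v) => //= u s IH; rewrite Hn IH; case: live.
Qed.

Definition Phi SA SB t := \sum_(v : V) rkp (sts (state_at Q om SA SB t) v).

Lemma Phi_bound SA SB t : Phi SA SB t <= 4 * #|V|.
Proof.
rewrite /Phi.
apply: leq_trans (_ : \sum_(v : V) 4 <= _).
  apply: leq_sum => v _; rewrite /rkp /rk; case: (sts _ v) => a b; case: a; case: b => //.
by rewrite sum_nat_const mulnC.
Qed.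

Lemma Phi_incr SA SB t : ~ stopped Q om SA SB t -> Phi SA SB t < Phi SA SB t.+1.
Proof.
move=> Hn; have [v Hv] := not_all_ex_not _ _ Hn.
have E1 : Phi SA SB t = rkp (sts (state_at Q om SA SB t) v) + \sum_(i | i != v) rkp (sts (state_at Q om SA SB t) i).
  by rewrite /Phi (bigD1 v).
have E2 : Phi SA SB t.+1 = rkp (sts (step Q om (state_at Q om SA SB t)) v) + \sum_(i | i != v) rkp (sts (step Q om (state_at Q om SA SB t)) i).
  by rewrite /Phi state_atS (bigD1 v).
have H1 := (rk_step (state_at Q om SA SB t) v).2 Hv.
have H2 : \sum_(i | i != v) rkp (sts (state_at Q om SA SB t) i) <=
          \sum_(i | i != v) rkp (sts (step Q om (state_at Q om SA SB t)) i).
  by apply: leq_sum => i _; exact: (rk_step _ i).1.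
rewrite E1 E2; lia.
Qed.

Lemma exists_stopped SA SB : exists t, stopped Q om SA SB t.
Proof.
apply: NNPP => Hn.
have H : forall t, t <= Phi SA SB t.
  elim=> [|t IH] //; have := Phi_incr (t := t) (fun H => Hn (ex_intro _ t H)); lia.
have := H (4 * #|V|).+1; have := Phi_bound SA SB (4 * #|V|).+1; lia.
Qed.

Lemma stopped_ge SA SB t t' : t <= t' -> stopped Q om SA SB t -> stopped Q om SA SB t'.
Proof.
move=> /subnK <-; elim: (t' - t) => //= k IH Hs; rewrite addSn; exact: stopped_next (IH Hs).
Qed.

Lemma Inv_init SA SB : InvSt (init_state om SA SB).
Proof.
move=> v; rewrite /InvS /init_state /=.
by case: X; case: (v \in SA); case: (v \in SB).
Qed.

Lemma Inv_at SA SB t : InvSt (state_at Q om SA SB t).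
Proof. elim: t => [|t IH]; [exact: Inv_init | rewrite state_atS; exact: Inv_step]. Qed.

Lemma cls1 s : cls s = 1 <-> s = Adpt.
Proof. by case: s. Qed.

Lemma adpt_ge SA SB v t t' : t <= t' ->
  cls (getS X (sts (state_at Q om SA SB t) v)) = 1 ->
  cls (getS X (sts (state_at Q om SA SB t') v)) = 1.
Proof.
move=> /subnK <-; elim: (t' - t) => // k IH Hs.
rewrite addSn state_atS; apply: cls_mono; [exact: Inv_at | exact: IH].
Qed.

Lemma final_char SA SB v :
  final_adopted Q om SA SB X v <-> exists t, cls (getS X (sts (state_at Q om SA SB t) v)) = 1.
Proof.
split.
  by move=> [t [_ H]]; exists t; apply/cls1.
move=> [t Ht]; have [t0 H0] := exists_stopped SA SB.
exists (maxn t t0); split.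
  exact: stopped_ge (leq_maxr t t0) H0.
apply/cls1; exact: adpt_ge (leq_maxl t t0) Ht.
Qed.

Lemma final_same SA SB SA' SB' T :
  Rel (init_state om SA SB) (init_state om SA' SB') ->
  (final_set_is Q om SA SB X T <-> final_set_is Q om SA' SB' X T).
Proof.
move=> H0.
have Rt : forall t, Rel (state_at Q om SA SB t) (state_at Q om SA' SB' t).
  elim=> [|t IH] //; rewrite !state_atS; apply: Rel_step => //; exact: Inv_at.
have E : forall v, final_adopted Q om SA SB X v <-> final_adopted Q om SA' SB' X v.
  move=> v; rewrite !final_char; split=> -[t Ht]; exists t.
    by rewrite -(Rt t v).1.
  by rewrite (Rt t v).1.
by split=> H v; rewrite H E.
Qed.

End S.

Lemma Pr_same (V : finType) (E : rel V) (p : V -> V -> R) (Q : GAP) X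
  (HQ : q_cond Q X = q_none Q X) SA SB SA' SB' T :
  (forall om : Omega V, Rel X (init_state om SA SB) (init_state om SA' SB')) ->
  Pr_final E p Q SA SB X T = Pr_final E p Q SA' SB' X T.
Proof.
move=> H; rewrite /Pr_final; congr (Expect E p _).
apply: functional_extensionality => om; rewrite /indic.
have := final_same HQ T (H om).
case: excluded_middle_informative; case: excluded_middle_informative => //; intros; exfalso; tauto.
Qed.

From Stdlib Require Import Reals.

Theorem lemma3 (V : finType) (E : rel V) (p : V -> V -> R) (Q : GAP) :
  (forall u v, E u v -> (0 <= p u v <= 1)%R) ->
  GAP_valid Q ->
  (qBA Q = qB0 Q ->
     forall (SB SA SA' : {set V}) (T : {set V}),
       Pr_final E p Q SA SB IB T = Pr_final E p Q SA' SB IB T) /\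
  (qAB Q = qA0 Q ->
     forall (SA SB SB' : {set V}) (T : {set V}),
       Pr_final E p Q SA SB IA T = Pr_final E p Q SA SB' IA T).
Proof.
move=> _ _; split.
- move=> HQ SB SA SA' T; apply: (@Pr_same _ _ _ _ IB HQ) => om v.
  rewrite /init_state /=; split=> //.
  by case: (v \in SA); case: (v \in SA'); case: (v \in SB); case: (tauO om v).
- move=> HQ SA SB SB' T; apply: (@Pr_same _ _ _ _ IA HQ) => om v.
  rewrite /init_state /=; split=> //.
  by case: (v \in SA); case: (v \in SB); case: (v \in SB'); case: (tauO om v).
Qed.
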